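(* Let $\mathcal F$ be a nice family of graphs, let $G$ be a graph containing no member of $\mathcal F$ as a subgraph, and let $u,v$ be non-adjacent vertices of $G$. Let $G'$ be obtained from $G$ by symmetrizing $u$ to $v$. Then $G'$ contains no member of $\mathcal F$ as a subgraph.
   Context: Symmetrizing a vertex $u$ to a vertex $v$ in a graph means deleting all edges incident to $u$ and then adding all edges $uw$ where $w$ is a neighbor of $v$ (so the new neighborhood of $u$ equals that of $v$). A (finite or infinite) sequence of graphs $F_1,F_2,\dots$ is nice if for every $i$ and every two non-adjacent vertices $u,v$ of $F_i$, the graph obtained from $F_i$ by joining both $u$ and $v$ to every vertex of $N(u)\cup N(v)$ contains some $F_j$ with $j<i$ as a subgraph. A family $\mathcal F$ of graphs is nice if its elements can be ordered to form a nice sequence. *)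

(* Defs.v *)
From mathcomp Require Import all_boot.
Set Implicit Arguments. Unset Strict Implicit. Unset Printing Implicit Defensive.

Record sgraph := SGraph {
  sg_V :> finType;
  sg_adj : rel sg_V;
  sg_sym : symmetric sg_adj;
  sg_irr : irreflexive sg_adj }.

Definition contains (H : sgraph) (T : finType) (e : rel T) : Prop :=
  exists f : sg_V H -> T, injective f /\
    forall x y, sg_adj x y -> e (f x) (f y).

Definition join_nbhd (T : finType) (e : rel T) (u v : T) : rel T :=
  fun x y =>
    [|| e x y,
        ((x == u) || (x == v)) && (e u y || e v y)
      | ((y == u) || (y == v)) && (e u x || e v x)].

(* Symmetrize u to v: delete all edges at u, then add uw for all w in N(v). *)
Definition symmetrize (T : finType) (e : rel T) (u v : T) : rel T :=
  fun x y =>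
    if x == u then e v y
    else if y == u then e v x
    else e x y.

(* Index range of a finite (Some n: indices 0..n-1) or infinite (None) sequence. *)
Definition in_range (N : option nat) (i : nat) : Prop :=
  match N with None => True | Some n => i < n end.

Definition nice_seq (N : option nat) (s : nat -> sgraph) : Prop :=
  forall i, in_range N i ->
    forall u v : sg_V (s i), u != v -> ~~ sg_adj u v ->
      exists j, j < i /\ contains (s j) (join_nbhd (@sg_adj (s i)) u v).

Definition nice_family (F : sgraph -> Prop) : Prop :=
  exists (N : option nat) (s : nat -> sgraph),
    nice_seq N s /\
    (forall i j, in_range N i -> in_range N j -> s i = s j -> i = j) /\
    (forall H, F H <-> exists i, in_range N i /\ s i = H).

(* Main.v *)
Require Import Defs.
From mathcomp Require Import all_boot.

Section Aux.
Variables (T : finType) (e : rel T) (esym : symmetric e) (eirr : irreflexive e)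
  (u v : T) (huv : ~~ e u v) (nuv : u != v).

Let G' := symmetrize e u v.

Lemma G'sym : symmetric G'.
Proof.
move=> x y; rewrite /G' /symmetrize.
case: (eqVneq x u) => hx; case: (eqVneq y u) => hy; subst => //=.
Qed.

Lemma G'uv y : G' u y = G' v y.
Proof.
have nvu : v != u by rewrite eq_sym.
rewrite /G' /symmetrize eqxx (negbTE nvu).
case: (eqVneq y u) => [->|hy] //.
by rewrite eirr -[e v u]esym (negbTE huv).
Qed.

Lemma G'nu x y : x != u -> y != u -> G' x y = e x y.
Proof. by move=> hx hy; rewrite /G' /symmetrize (negbTE hx) (negbTE hy). Qed.

Lemma G'u y : y != u -> G' u y = e v y.
Proof. by move=> hy; rewrite /G' /symmetrize eqxx. Qed.

Lemma G'uu : G' u v = false.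
Proof. by rewrite G'u 1?eq_sym // eirr. Qed.

End Aux.

Theorem proposition4p1 (F : sgraph -> Prop) (hF : nice_family F)
  (T : finType) (e : rel T) (esym : symmetric e) (eirr : irreflexive e)
  (hG : forall H, F H -> ~ contains H e)
  (u v : T) (huv : ~~ e u v) :
  forall H, F H -> ~ contains H (symmetrize e u v).
Proof.
move=> H FH.
case: (eqVneq u v) => [Euv|nuv].
  move=> [f [fi fe]]; apply: (hG H FH); exists f; split => // x y /fe.
  rewrite /symmetrize -Euv.
  case: (eqVneq (f x) u) => [->|hx]; case: (eqVneq (f y) u) => [->|hy] //=.
  by rewrite esym.
have [N [s [ns [_ hs]]]] := hF.
have Fs : forall i, in_range N i -> F (s i) by move=> i hi; apply/hs; exists i.
suff key : forall n i, i < n -> in_range N i -> ~ contains (s i) (symmetrize e u v).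
  have [i [hi <-]] := (proj1 (hs H) FH).
  exact: (key i.+1 i (ltnSn i) hi).
elim=> [//|n IH] i lti hi [f [fi fe]].
have nsu : forall x y : s i, sg_adj x y -> x != y.
  by move=> x y hxy; apply/eqP => E; rewrite E (sg_irr y) in hxy.
case: (boolP [exists x, f x == u]) => [/existsP [a /eqP fa]|nu]; last first.
  apply: (hG (s i) (Fs i hi)); exists f; split => // x y /fe.
  have h z : f z != u by apply/negP => hz; apply: (negP nu); apply/existsP; exists z.
  by rewrite G'nu.
case: (boolP [exists x, f x == v]) => [/existsP [b /eqP fb]|nv]; last first.
  have h z : f z != v by apply/negP => hz; apply: (negP nv); apply/existsP; exists z.
  apply: (hG (s i) (Fs i hi)).
  exists (fun x => if f x == u then v else f x); split.
    move=> x y /=.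
    case: (eqVneq (f x) u) => hx; case: (eqVneq (f y) u) => hy.
    - by move=> _; apply: fi; rewrite hx hy.
    - by move=> E; move: (h y); rewrite -E eqxx.
    - by move=> E; move: (h x); rewrite E eqxx.
    - exact: fi.
  move=> x y hxy /=; have := fe _ _ hxy.
  have nxy := nsu _ _ hxy.
  case: (eqVneq (f x) u) => hx; case: (eqVneq (f y) u) => hy.
  - by move: nxy; rewrite (fi x y) ?eqxx // hx hy.
  - by rewrite hx G'u.
  - by rewrite hy G'sym // G'u // esym.
  - by rewrite G'nu.
have nab : a != b by apply/eqP => E; move: nuv; rewrite -fa -fb E eqxx.
have nadj : ~~ sg_adj a b.
  apply/negP => /fe; rewrite fa fb G'uu //.
have [j [ltj [g [gi ge]]]] := ns i hi a b nab nadj.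
have hj : in_range N j by move: hi; clear -ltj; case: N => //= m; apply: ltn_trans.
apply: (IH j _ hj); first by apply: leq_trans ltj _.
exists (fun x => f (g x)); split; first by move=> x y /fi /gi.
have Gf z w : (z == a) || (z == b) -> symmetrize e u v (f z) w = symmetrize e u v u w.
  by case/orP => /eqP ->; rewrite ?fa ?fb // G'uv.
move=> x y /ge; rewrite /join_nbhd.
case/or3P => [/fe //| /andP [hx hy] | /andP [hy hx]].
  rewrite Gf //; case/orP: hy => /fe; rewrite ?fa ?fb //.
  by rewrite -G'uv.
rewrite G'sym // Gf //; case/orP: hx => /fe; rewrite ?fa ?fb //.
by rewrite -G'uv.
Qed.
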